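(* Let $x\in(0,\infty)$. Then: (1) for $k\in\mathbb{Z}$, $a^{\rm st}_k(x)=g(s_k(x))$ and $b^{\rm st}_k(x)=h(s_k(x))$; (2) for $j<k$ in $\mathbb{Z}$, $m^{\rm st}_k(x)-m^{\rm st}_j(x)=\sum_{i=j+1}^k\frac{1}{Z(s_i(x))}$ and $n^{\rm st}_j(x)-n^{\rm st}_k(x)=\sum_{i=j+1}^k\frac{s_i(x)}{Z(s_i(x))}$; in particular $m^{\rm st}_k(x)-m^{\rm st}_{k-1}(x)=Z(s_k(x))^{-1}$ and $n^{\rm st}_{k-1}(x)-n^{\rm st}_k(x)=s_k(x)Z(s_k(x))^{-1}$; (3) for $j,k\in\mathbb{N}$, $\mathcal{M}_{j+1,k+1}(x)=\Big(\sum_{i=-j}^{k+1}\frac{1}{Z(s_i(x))}\Big)^{-1}\sum_{i=-j}^{k+1}\frac{s_i(x)}{Z(s_i(x))}$; (4) $\mathcal{M}(x)=\sum_{i\in\mathbb{Z}}\frac{s_i(x)}{Z(s_i(x))}$.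
   Context: For $x>0$, $\omega=\sqrt{8x+1}$, $c(x)=\frac{(\omega+3)^2}{16}$, $d(x)=\frac{(\omega+3)^2}{8(\omega+1)}$, $s(x)=\frac{(\omega-1)^2}{4(\omega+7)}$; $s_0=\mathrm{id}$, $s_{-1}(x)=1/s(1/x)$, $s_i=s\circ s_{i-1}$, $s_{-i}=s_{-1}\circ s_{-(i-1)}$ ($i\in\mathbb{N}_+$); $c_j=c\circ s_j$, $d_j=d\circ s_j$. Product convention: $\prod_{i=0}^kh_i=h_0\cdots h_k$ for $k\ge0$, $=1$ for $k=-1$, $=h_{k+1}^{-1}\cdots h_{-1}^{-1}$ for $k\le-2$. $Z(x)=\sum_{k\in\mathbb{Z}}\prod_{i=0}^k(c_i(x)-1)$; $f(x)=\frac{xc(x)d(x)}{(c(x)+xd(x))^2}$, $g(x)=Z(x)^{-1}c(x)f(x)$, $h(x)=Z(x)^{-1}xd(x)f(x)$. ABMN system on $\mathbb{Z}$: $a_i,b_i\ge0$, $m_i,n_i\in\mathbb{R}$ with $(a_i+b_i)(m_i+a_i)=a_im_{i+1}+b_im_{i-1}$, $(a_i+b_i)(n_i+b_i)=a_in_{i+1}+b_in_{i-1}$, $(a_i+b_i)^2=b_i(m_{i+1}-m_{i-1})$, $(a_i+b_i)^2=a_i(n_{i-1}-n_{i+1})$; positive if all $a_i,b_i>0$; standard if positive with $\lim_{-\infty}m=0$, $\lim_\infty n=0$, $\lim_\infty m=1$. $(a^{\rm st}(x),b^{\rm st}(x),m^{\rm st}(x),n^{\rm st}(x))$ is the unique standard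 solution with central ratio $\frac{n_{-1}-n_0}{m_0-m_{-1}}=x$; $\mathcal{M}(x)=\lim_{i\to-\infty}n^{\rm st}_i(x)$. For $p,r\in\mathbb{N}_+$, $\mathcal{M}_{p,r}(x)=\frac{n_{-p}-n_r}{m_r-m_{-p}}$ computed for any positive ABMN solution with central ratio $x$ (e.g. the standard one). *)

(* Defs.v *)
From Stdlib Require Import Reals Lra ZArith.
From Coquelicot Require Import Coquelicot.
Open Scope R_scope.

Definition omega (x : R) : R := sqrt (8 * x + 1).
Definition cfun (x : R) : R := (omega x + 3) ^ 2 / 16.
Definition dfun (x : R) : R := (omega x + 3) ^ 2 / (8 * (omega x + 1)).
Definition sfun (x : R) : R := (omega x - 1) ^ 2 / (4 * (omega x + 7)).
Definition sfun_m1 (x : R) : R := / sfun (/ x).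

Definition s_iter (i : Z) (x : R) : R :=
  match i with
  | Z0 => x
  | Zpos p => Nat.iter (Pos.to_nat p) sfun x
  | Zneg p => Nat.iter (Pos.to_nat p) sfun_m1 x
  end.

Definition c_j (j : Z) (x : R) : R := cfun (s_iter j x).

Fixpoint prod_nat (F : nat -> R) (n : nat) : R :=
  match n with
  | O => 1
  | S n' => prod_nat F n' * F n'
  end.

Fixpoint sum_nat (F : nat -> R) (n : nat) : R :=
  match n with
  | O => 0
  | S n' => sum_nat F n' + F n'
  end.

(* zsum F j k = sum_{i=j}^{k} F i  (empty, = 0, if k < j) *)
Definition zsum (F : Z -> R) (j k : Z) : R :=
  sum_nat (fun t => F (j + Z.of_nat t)%Z) (Z.to_nat (k - j + 1)).

(* The product convention prod_{i=0}^k (c_i(x) - 1):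
   k >= 0 : (c_0 - 1) ... (c_k - 1);  k = -1 : 1;
   k <= -2 : (c_{k+1} - 1)^{-1} ... (c_{-1} - 1)^{-1}. *)
Definition prodc (k : Z) (x : R) : R :=
  if (0 <=? k)%Z then
    prod_nat (fun t => c_j (Z.of_nat t) x - 1) (Z.to_nat k + 1)
  else
    prod_nat (fun t => / (c_j (- Z.of_nat t - 1)%Z x - 1)) (Z.to_nat (- k - 1)).

(* Z(x) = sum_{k in Z} prod_{i=0}^k (c_i(x) - 1), split as k >= 0 and k <= -1 *)
Definition Zfun (x : R) : R :=
  Series (fun p : nat => prodc (Z.of_nat p) x)
  + Series (fun p : nat => prodc (- Z.of_nat p - 1)%Z x).

Definition ffun (x : R) : R :=
  x * cfun x * dfun x / (cfun x + x * dfun x) ^ 2.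
Definition gfun (x : R) : R := / Zfun x * cfun x * ffun x.
Definition hfun (x : R) : R := / Zfun x * x * dfun x * ffun x.

Definition ABMN (a b m n : Z -> R) : Prop :=
  forall i : Z,
    0 <= a i /\ 0 <= b i /\
    (a i + b i) * (m i + a i) = a i * m (i + 1)%Z + b i * m (i - 1)%Z /\
    (a i + b i) * (n i + b i) = a i * n (i + 1)%Z + b i * n (i - 1)%Z /\
    (a i + b i) ^ 2 = b i * (m (i + 1)%Z - m (i - 1)%Z) /\
    (a i + b i) ^ 2 = a i * (n (i - 1)%Z - n (i + 1)%Z).

Definition positive_ABMN (a b m n : Z -> R) : Prop :=
  ABMN a b m n /\ forall i : Z, 0 < a i /\ 0 < b i.

Definition standard_ABMN (a b m n : Z -> R) : Prop :=
  positive_ABMN a b m n /\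
  is_lim_seq (fun p : nat => m (- Z.of_nat p)%Z) 0 /\
  is_lim_seq (fun p : nat => n (Z.of_nat p)) 0 /\
  is_lim_seq (fun p : nat => m (Z.of_nat p)) 1.

Definition central_ratio (m n : Z -> R) : R :=
  (n (-1)%Z - n 0%Z) / (m 0%Z - m (-1)%Z).

Definition Mpr (p r : Z) (m n : Z -> R) : R :=
  (n (- p)%Z - n r) / (m r - m (- p)%Z).

(* Main.v *)
Require Import Defs.
From Stdlib Require Import Reals ZArith Lra Lia Psatz.
From Coquelicot Require Import Coquelicot.
Open Scope R_scope.

Lemma omega_t t : 0 < t -> omega (t*(1+2*t)) = 4*t+1.
Proof. intro. unfold omega. replace (8*(t*(1+2*t))+1) with ((4*t+1)^2) by ring.
apply sqrt_pow2; lra. Qed.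

Lemma sfun_t t : 0 < t -> sfun (t*(1+2*t)) = t^2/(2+t).
Proof. intro. unfold sfun. rewrite omega_t by lra. field. lra. Qed.

Lemma sfunm1_t t : 0 < t -> sfun_m1 (t^2/(2+t)) = t*(1+2*t).
Proof. intro. unfold sfun_m1.
replace (/ (t^2/(2+t))) with ((/t)*(1+2*(/t))) by (field; lra).
rewrite sfun_t by (apply Rinv_0_lt_compat; lra). field. lra. Qed.

Lemma cfun_t t : 0 < t -> cfun (t*(1+2*t)) = (t+1)^2.
Proof. intro. unfold cfun. rewrite omega_t by lra. field. Qed.

Lemma dfun_t t : 0 < t -> dfun (t*(1+2*t)) = (t+1)^2/(2*t+1).
Proof. intro. unfold dfun. rewrite omega_t by lra. field. lra. Qed.

Lemma cf_t t : 0 < t -> cfun (t*(1+2*t)) * ffun (t*(1+2*t)) = t.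
Proof. intro. unfold ffun. 
replace (cfun (t*(1+2*t)) + t*(1+2*t) * dfun (t*(1+2*t))) with ((t+1)^3)
 by (rewrite cfun_t, dfun_t by lra; field; lra).
rewrite cfun_t, dfun_t by lra. field. lra. Qed.

Lemma df_t t : 0 < t -> t*(1+2*t) * dfun (t*(1+2*t)) * ffun (t*(1+2*t)) = t^2.
Proof. intro. unfold ffun. 
replace (cfun (t*(1+2*t)) + t*(1+2*t) * dfun (t*(1+2*t))) with ((t+1)^3)
 by (rewrite cfun_t, dfun_t by lra; field; lra).
rewrite cfun_t, dfun_t by lra. field. lra. Qed.

Lemma node (a b m n : Z -> R) i : ABMN a b m n -> 0 < a i -> 0 < b i ->
  m (i+1)%Z - m i = 2*a i + b i /\ m i - m (i-1)%Z = a i ^2 / b i /\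
  n (i-1)%Z - n i = a i + 2 * b i /\ n i - n (i+1)%Z = b i ^ 2 / a i.
Proof.
intros H Ha Hb. destruct (H i) as (_&_&e1&e2&e3&e4).
set (A := a i) in *. set (B := b i) in *.
set (mp := m (i+1)%Z) in *. set (mm := m (i-1)%Z) in *. set (mi := m i) in *.
set (np := n (i+1)%Z) in *. set (nm := n (i-1)%Z) in *. set (ni := n i) in *.
assert (P1 : (A+B)*((mp - mi) - (2*A+B)) = 0) by nra.
assert (Q1 : mp - mi = 2*A+B).
{ apply Rmult_integral in P1. destruct P1; lra. }
assert (P2 : (A+B)*((nm - ni) - (A+2*B)) = 0) by nra.
assert (Q2 : nm - ni = A+2*B).
{ apply Rmult_integral in P2. destruct P2; lra. }
assert (R1 : B*(mi-mm) = A^2) by nra.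
assert (R2 : A*(ni-np) = B^2) by nra.
split; [exact Q1|]. split.
{ apply (Rmult_eq_reg_l B); [rewrite R1; field; lra | lra]. }
split; [exact Q2|].
apply (Rmult_eq_reg_l A); [rewrite R2; field; lra | lra].
Qed.

Lemma lim_shift (f : Z -> R) (l : R) c :
  is_lim_seq (fun p => f (Z.of_nat p)) l -> is_lim_seq (fun p => f (c + Z.of_nat p)%Z) l.
Proof.
intro H. destruct (Z_le_gt_dec 0 c) as [Hc|Hc].
- apply (proj1 (is_lim_seq_incr_n _ (Z.to_nat c) l)) in H.
  revert H. apply is_lim_seq_ext.
  intro p. simpl. f_equal. rewrite Nat2Z.inj_add, Z2Nat.id; lia.
- apply (proj2 (is_lim_seq_incr_n _ (Z.to_nat (-c)) l)).
  apply (is_lim_seq_ext (fun p => f (Z.of_nat p))); [|exact H].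
  intro p. f_equal. rewrite Nat2Z.inj_add, Z2Nat.id; lia.
Qed.

Lemma lim_shift_neg (f : Z -> R) (l : R) c :
  is_lim_seq (fun p => f (- Z.of_nat p)%Z) l -> is_lim_seq (fun p => f (c - Z.of_nat p)%Z) l.
Proof.
intro H. pose (g := fun z => f (- z)%Z).
assert (H' : is_lim_seq (fun p => g (Z.of_nat p)) l) by exact H.
apply (lim_shift g l (-c)) in H'.
revert H'. apply is_lim_seq_ext.
intro p. unfold g. f_equal. lia.
Qed.

Lemma lim_div (u : nat -> R) (l d : R) : is_lim_seq u l -> is_lim_seq (fun p => u p / d) (l / d).
Proof. intro H. apply (is_lim_seq_scal_r u (/ d)) in H. exact H. Qed.


Lemma lim_series (a : nat -> R) (l : R) : is_lim_seq (sum_n a) l -> is_series a l.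
Proof. intro H. exact H. Qed.

Definition Dm (m:Z->R) i := m i - m (i-1)%Z.
Definition En (n:Z->R) i := n (i-1)%Z - n i.

Lemma facts a b m n : ABMN a b m n -> (forall i, 0 < a i /\ 0 < b i) -> forall i,
 Dm m i = a i^2/b i /\ Dm m (i+1)%Z = 2 * a i + b i /\ En n i = a i + 2 * b i /\
 En n (i+1)%Z = b i^2/a i.
Proof.
intros H Hp i. destruct (Hp i). destruct (node a b m n i H) as (h1&h2&h3&h4); try lra.
unfold Dm, En. replace (i+1-1)%Z with i by lia. lra.
Qed.

Lemma iter_lemma (r : Z -> R) :
  (forall i, sfun (r i) = r (i+1)%Z /\ sfun_m1 (r (i+1)%Z) = r i) ->
  forall k j, s_iter j (r k) = r (k+j)%Z.
Proof.
intros Hs.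
assert (A : forall p k, Nat.iter p sfun (r k) = r (k + Z.of_nat p)%Z).
{ induction p; intro k; simpl. f_equal; lia.
  rewrite IHp, (proj1 (Hs _)). f_equal; lia. }
assert (B : forall p k, Nat.iter p sfun_m1 (r k) = r (k - Z.of_nat p)%Z).
{ induction p; intro k; simpl. f_equal; lia.
  rewrite IHp. replace (k - Z.of_nat p)%Z with ((k - Z.of_nat (S p)) + 1)%Z by lia.
  rewrite (proj2 (Hs _)). reflexivity. }
intros k j. destruct j as [|p|p]; simpl.
- f_equal; lia.
- rewrite A. f_equal. lia.
- rewrite B. f_equal. lia.
Qed.

Lemma sum_tel (D : Z -> R) (m : Z -> R) j NN :
  (forall i, D i = m i - m (i-1)%Z) ->
  Defs.sum_nat (fun t => D (j + Z.of_nat t)%Z) NN = m (j + Z.of_nat NN - 1)%Z - m (j-1)%Z.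
Proof.
intro HD. induction NN; simpl.
- replace (j+0-1)%Z with (j-1)%Z by lia. ring.
- rewrite IHNN, HD. replace (j + Z.of_nat NN - 1)%Z with (j + Z.of_nat NN - 1)%Z by lia.
  replace (j + Z.pos (Pos.of_succ_nat NN) - 1)%Z with (j + Z.of_nat NN)%Z by lia. ring.
Qed.

Lemma zsum_tel (D : Z -> R) (m : Z -> R) j k :
  (forall i, D i = m i - m (i-1)%Z) -> (j <= k+1)%Z ->
  zsum D j k = m k - m (j-1)%Z.
Proof.
intros HD Hjk. unfold zsum. rewrite (sum_tel D m) by exact HD.
rewrite Z2Nat.id by lia. f_equal. f_equal. lia.
Qed.

Lemma zsum_ext (F G : Z -> R) j k : (forall i, F i = G i) -> zsum F j k = zsum G j k.
Proof.
intro H. unfold zsum. generalize (Z.to_nat (k - j + 1)). induction n; simpl; auto.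
rewrite IHn, H. reflexivity.
Qed.

Lemma Zfun_lemma (r D m : Z -> R) k :
  (forall i, s_iter 0 (r i) = r i) ->
  (forall i j, s_iter j (r i) = r (i+j)%Z) ->
  (forall i, 0 < D i) ->
  (forall i, D i = m i - m (i-1)%Z) ->
  (forall i, cfun (r i) - 1 = D (i+1)%Z / D i) ->
  is_lim_seq (fun p => m (- Z.of_nat p)%Z) 0 ->
  is_lim_seq (fun p => m (Z.of_nat p)) 1 ->
  Zfun (r k) = / D k.
Proof.
intros _ Hit HDp HD Hcf Hm0 Hm1.
assert (Hnz : forall i, D i <> 0) by (intro i; specialize (HDp i); lra).
assert (P1 : forall p, prodc (Z.of_nat p) (r k) = D (k + Z.of_nat p + 1)%Z / D k).
{ intro p. unfold prodc.
  replace (0 <=? Z.of_nat p)%Z with true by (symmetry; apply Z.leb_le; lia).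
  rewrite Nat2Z.id.
  assert (G : forall NN, Defs.prod_nat (fun t => c_j (Z.of_nat t) (r k) - 1) NN
             = D (k + Z.of_nat NN)%Z / D k).
  { induction NN; simpl.
    - rewrite Z.add_0_r. field. apply Hnz.
    - rewrite IHNN. unfold c_j. rewrite Hit, Hcf.
      replace (k + Z.pos (Pos.of_succ_nat NN))%Z with (k + Z.of_nat NN + 1)%Z by lia.
      field. split; apply Hnz. }
  rewrite G. f_equal. f_equal. lia. }
assert (P2 : forall p, prodc (- Z.of_nat p - 1) (r k) = D (k - Z.of_nat p)%Z / D k).
{ intro p. unfold prodc.
  replace (0 <=? - Z.of_nat p - 1)%Z with false by (symmetry; apply Z.leb_gt; lia).
  replace (- (- Z.of_nat p - 1) - 1)%Z with (Z.of_nat p) by lia.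
  rewrite Nat2Z.id.
  induction p; simpl.
  - rewrite Z.sub_0_r. field. apply Hnz.
  - rewrite IHp. unfold c_j. rewrite Hit.
    replace (k + (- Z.of_nat p - 1))%Z with (k - Z.of_nat p - 1)%Z by lia.
    rewrite Hcf. replace (k - Z.of_nat p - 1 + 1)%Z with (k - Z.of_nat p)%Z by lia.
    replace (k - Z.pos (Pos.of_succ_nat p))%Z with (k - Z.of_nat p - 1)%Z by lia.
    field. repeat split; apply Hnz. }
assert (S1 : is_series (fun p => prodc (Z.of_nat p) (r k)) ((1 - m k) / D k)).
{ apply (is_series_ext (fun p => D (k + Z.of_nat p + 1)%Z / D k)).
  { intro p; symmetry; apply P1. }
  assert (Sm : forall NN, @eq R (sum_n (fun p => D (k + Z.of_nat p + 1)%Z / D k) NN)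
     ((m (k + 1 + Z.of_nat NN)%Z - m k) / D k)).
  { induction NN.
    - rewrite sum_O. rewrite (HD (k + Z.of_nat 0 + 1)%Z). simpl. replace (k+0+1-1)%Z with k by lia.
      replace (k+1+0)%Z with (k+0+1)%Z by lia. reflexivity.
    - rewrite sum_Sn, IHNN. change plus with Rplus. rewrite (HD (k + Z.of_nat (S NN) + 1)%Z).
      replace (k + Z.of_nat (S NN) + 1 - 1)%Z with (k + 1 + Z.of_nat NN)%Z by lia.
      replace (k + Z.of_nat (S NN) + 1)%Z with (k + 1 + Z.of_nat (S NN))%Z by lia.
      field. apply Hnz. }
  apply lim_series. apply (is_lim_seq_ext (fun NN => (m (k + 1 + Z.of_nat NN)%Z - m k) / D k)).
  { intro; symmetry; apply Sm. }
  apply lim_div. apply is_lim_seq_minus'. apply (lim_shift m 1). exact Hm1.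
  apply is_lim_seq_const. }
assert (S2 : is_series (fun p => prodc (- Z.of_nat p - 1) (r k)) (m k / D k)).
{ apply (is_series_ext (fun p => D (k - Z.of_nat p)%Z / D k)).
  { intro p; symmetry; apply P2. }
  assert (Sm : forall NN, @eq R (sum_n (fun p => D (k - Z.of_nat p)%Z / D k) NN)
     ((m k - m (k - 1 - Z.of_nat NN)%Z) / D k)).
  { induction NN.
    - rewrite sum_O. rewrite (HD (k - Z.of_nat 0)%Z). simpl. replace (k-0)%Z with k by lia.
      replace (k-1-0)%Z with (k-1)%Z by lia. reflexivity.
    - rewrite sum_Sn, IHNN. change plus with Rplus. rewrite (HD (k - Z.of_nat (S NN))%Z).
      replace (k - Z.of_nat (S NN) - 1)%Z with (k - 1 - Z.of_nat (S NN))%Z by lia.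
      replace (k - Z.of_nat (S NN))%Z with (k - 1 - Z.of_nat NN)%Z by lia.
      field. apply Hnz. }
  apply lim_series. apply (is_lim_seq_ext (fun NN => (m k - m (k - 1 - Z.of_nat NN)%Z) / D k)).
  { intro; symmetry; apply Sm. }
  assert (L : is_lim_seq (fun NN => (m k - m (k - 1 - Z.of_nat NN)%Z) / D k) ((m k - 0) / D k)).
  { apply lim_div. apply is_lim_seq_minus'. apply is_lim_seq_const.
    apply (lim_shift_neg m 0). exact Hm0. }
  rewrite Rminus_0_r in L. exact L. }
unfold Zfun. rewrite (is_series_unique _ _ S1), (is_series_unique _ _ S2).
field. apply Hnz.
Qed.


Theorem mainTheorem19 :
  forall x : R, 0 < x ->
  forall a b m n : Z -> R,
    standard_ABMN a b m n -> central_ratio m n = x ->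
    (forall k : Z, a k = gfun (s_iter k x) /\ b k = hfun (s_iter k x)) /\
    (forall j k : Z, (j < k)%Z ->
       m k - m j = zsum (fun i => / Zfun (s_iter i x)) (j + 1) k /\
       n j - n k = zsum (fun i => s_iter i x / Zfun (s_iter i x)) (j + 1) k) /\
    (forall k : Z,
       m k - m (k - 1)%Z = / Zfun (s_iter k x) /\
       n (k - 1)%Z - n k = s_iter k x / Zfun (s_iter k x)) /\
    (forall j k : nat,
       Mpr (Z.of_nat j + 1) (Z.of_nat k + 1) m n =
       / zsum (fun i => / Zfun (s_iter i x)) (- Z.of_nat j) (Z.of_nat k + 1)
       * zsum (fun i => s_iter i x / Zfun (s_iter i x)) (- Z.of_nat j) (Z.of_nat k + 1)) /\
    (ex_series (fun p : nat => s_iter (Z.of_nat p) x / Zfun (s_iter (Z.of_nat p) x)) /\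
     ex_series (fun p : nat => s_iter (- Z.of_nat p - 1)%Z x
                               / Zfun (s_iter (- Z.of_nat p - 1)%Z x)) /\
     is_lim_seq (fun p : nat => n (- Z.of_nat p)%Z)
       (Series (fun p : nat => s_iter (Z.of_nat p) x / Zfun (s_iter (Z.of_nat p) x))
        + Series (fun p : nat => s_iter (- Z.of_nat p - 1)%Z x
                                 / Zfun (s_iter (- Z.of_nat p - 1)%Z x)))).
Proof.
intros x Hx a b m n Hst Hcr.
destruct Hst as [[Habmn Hpos] [Hm0 [Hn0 Hm1]]].
pose (D := Dm m). pose (E := En n). pose (t := fun i => b i / a i).
pose (r := fun i => E i / D i).
assert (F := facts a b m n Habmn Hpos).
assert (Hap : forall i, 0 < a i) by (intro i; apply Hpos).
assert (Hbp : forall i, 0 < b i) by (intro i; apply Hpos).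
assert (Htp : forall i, 0 < t i).
{ intro i. unfold t. apply Rdiv_lt_0_compat; auto. }
assert (HDp : forall i, 0 < D i).
{ intro i. unfold D. rewrite (proj1 (F i)). apply Rdiv_lt_0_compat; auto.
  apply pow_lt; auto. }
assert (HEp : forall i, 0 < E i).
{ intro i. unfold E. rewrite (proj1 (proj2 (proj2 (F i)))).
  specialize (Hap i); specialize (Hbp i); lra. }
assert (Hr : forall i, r i = t i * (1 + 2 * t i)).
{ intro i. unfold r, t, D, E. destruct (F i) as (f1&f2&f3&f4). rewrite f1, f3.
  specialize (Hap i); specialize (Hbp i). field. lra. }
assert (Hr1 : forall i, r (i+1)%Z = t i ^ 2 / (2 + t i)).
{ intro i. unfold r, t, D, E. destruct (F i) as (f1&f2&f3&f4). rewrite f2, f4.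
  specialize (Hap i); specialize (Hbp i). field. lra. }
assert (Hs : forall i, sfun (r i) = r (i+1)%Z /\ sfun_m1 (r (i+1)%Z) = r i).
{ intro i. rewrite Hr, Hr1. split.
  - apply sfun_t, Htp.
  - apply sfunm1_t, Htp. }
assert (Hit := iter_lemma r Hs).
assert (Hcf : forall i, cfun (r i) - 1 = D (i+1)%Z / D i).
{ intro i. rewrite Hr, cfun_t by apply Htp. unfold t, D.
  destruct (F i) as (f1&f2&f3&f4). rewrite f1, f2.
  specialize (Hap i); specialize (Hbp i). field. lra. }
assert (HZ : forall k, Zfun (r k) = / D k).
{ intro k. apply (Zfun_lemma r D m k); auto. }
assert (Hx0 : x = r 0%Z) by (rewrite <- Hcr; reflexivity).
assert (Hsx : forall i, s_iter i x = r i) by (intro i; rewrite Hx0, Hit; reflexivity).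
assert (Hnz : forall i, D i <> 0) by (intro i; specialize (HDp i); lra).
assert (HiZ : forall i, / Zfun (s_iter i x) = D i).
{ intro i. rewrite Hsx, HZ, Rinv_inv. reflexivity. }
assert (HeZ : forall i, s_iter i x / Zfun (s_iter i x) = E i).
{ intro i. unfold Rdiv. rewrite HiZ, Hsx. unfold r. field. apply Hnz. }
split.
{ intro k. rewrite Hsx. unfold gfun, hfun. split.
  - rewrite Rmult_assoc, HZ, Rinv_inv, (Hr k), cf_t by apply Htp.
    unfold t, D. rewrite (proj1 (F k)). specialize (Hap k); specialize (Hbp k). field. lra.
  - replace (/ Zfun (r k) * r k * dfun (r k) * ffun (r k))
      with (/ Zfun (r k) * (r k * dfun (r k) * ffun (r k))) by ring.
    rewrite HZ, Rinv_inv, (Hr k), df_t by apply Htp.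
    unfold t, D. rewrite (proj1 (F k)). specialize (Hap k); specialize (Hbp k). field. lra. }
assert (ZD : forall j k, (j <= k + 1)%Z -> zsum (fun i => / Zfun (s_iter i x)) j k = m k - m (j-1)%Z).
{ intros j k Hjk. rewrite (zsum_ext _ D) by exact HiZ. apply zsum_tel; auto. }
assert (ZE : forall j k, (j <= k + 1)%Z ->
   zsum (fun i => s_iter i x / Zfun (s_iter i x)) j k = n (j-1)%Z - n k).
{ intros j k Hjk. rewrite (zsum_ext _ E) by exact HeZ.
  rewrite (zsum_tel E (fun i => - n i)); auto. ring.
  intro i. unfold E, En. ring. }
split.
{ intros j k Hjk. rewrite ZD, ZE by lia. replace (j+1-1)%Z with j by lia. auto. }
split.
{ intro k. rewrite HiZ, HeZ. split; reflexivity. }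
split.
{ intros j k. unfold Mpr. rewrite ZD, ZE by lia.
  replace (- (Z.of_nat j + 1))%Z with (- Z.of_nat j - 1)%Z by lia.
  unfold Rdiv. ring. }
assert (SP : is_series (fun p => E (Z.of_nat p)) (n (-1)%Z)).
{ apply lim_series.
  assert (Sm : forall NN, @eq R (sum_n (fun p => E (Z.of_nat p)) NN) (n (-1)%Z - n (Z.of_nat NN))).
  { induction NN.
    - rewrite sum_O. reflexivity.
    - rewrite sum_Sn, IHNN. change plus with Rplus. unfold E, En.
      replace (Z.of_nat (S NN) - 1)%Z with (Z.of_nat NN) by lia. ring. }
  apply (is_lim_seq_ext (fun NN => n (-1)%Z - n (Z.of_nat NN))).
  { intro; symmetry; apply Sm. }
  assert (L : is_lim_seq (fun NN => n (-1)%Z - n (Z.of_nat NN)) (n (-1)%Z - 0)).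
  { apply is_lim_seq_minus'. apply is_lim_seq_const. exact Hn0. }
  rewrite Rminus_0_r in L. exact L. }
assert (SD : is_series (fun p => 2 * D (- Z.of_nat p)%Z) ((m 0%Z - 0) / / 2)).
{ apply lim_series.
  assert (Sm : forall NN, @eq R (sum_n (fun p => 2 * D (- Z.of_nat p)%Z) NN)
     ((m 0%Z - m (0 - 1 - Z.of_nat NN)%Z) / / 2)).
  { induction NN.
    - rewrite sum_O. unfold D, Dm. simpl. field.
    - rewrite sum_Sn, IHNN. change plus with Rplus. unfold D, Dm.
      replace (- Z.of_nat (S NN) - 1)%Z with (0 - 1 - Z.of_nat (S NN))%Z by lia.
      replace (- Z.of_nat (S NN))%Z with (0 - 1 - Z.of_nat NN)%Z by lia. field. }
  apply (is_lim_seq_ext (fun NN => (m 0%Z - m (0 - 1 - Z.of_nat NN)%Z) / / 2)).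
  { intro; symmetry; apply Sm. }
  apply lim_div. apply is_lim_seq_minus'. apply is_lim_seq_const.
  apply (lim_shift_neg m 0). exact Hm0. }
assert (EN : ex_series (fun p => E (- Z.of_nat p - 1)%Z)).
{ apply (@ex_series_le R_AbsRing R_CompleteNormedModule _ (fun p => 2 * D (- Z.of_nat p)%Z)).
  - intro p. change norm with Rabs. rewrite Rabs_pos_eq by (apply Rlt_le, HEp).
    unfold E, D. replace (Dm m (- Z.of_nat p)%Z) with (Dm m (- Z.of_nat p - 1 + 1)%Z) by (f_equal; lia).
    destruct (F (- Z.of_nat p - 1)%Z) as (f1&f2&f3&f4). rewrite f2, f3.
    specialize (Hap (- Z.of_nat p - 1)%Z); specialize (Hbp (- Z.of_nat p - 1)%Z). lra.
  - exists ((m 0%Z - 0) / / 2). exact SD. }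
rewrite (Series_ext _ (fun p => E (Z.of_nat p))) by (intro; apply HeZ).
rewrite (Series_ext (fun p => s_iter (- Z.of_nat p - 1)%Z x / Zfun (s_iter (- Z.of_nat p - 1)%Z x))
   (fun p => E (- Z.of_nat p - 1)%Z)) by (intro; apply HeZ).
split.
{ apply (ex_series_ext (fun p => E (Z.of_nat p))). intro; symmetry; apply HeZ.
  exists (n (-1)%Z). exact SP. }
split.
{ apply (ex_series_ext (fun p => E (- Z.of_nat p - 1)%Z)). intro; symmetry; apply HeZ.
  exact EN. }
rewrite (is_series_unique _ _ SP).
set (S2 := Series (fun p => E (- Z.of_nat p - 1)%Z)).
assert (HS2 : is_series (fun p => E (- Z.of_nat p - 1)%Z) S2) by (apply Series_correct; exact EN).
assert (Sm : forall NN, @eq R (sum_n (fun p => E (- Z.of_nat p - 1)%Z) NN)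
     (n (- Z.of_nat NN - 2)%Z - n (-1)%Z)).
{ induction NN.
  - rewrite sum_O. reflexivity.
  - rewrite sum_Sn, IHNN. change plus with Rplus. unfold E, En.
    replace (- Z.of_nat (S NN) - 1 - 1)%Z with (- Z.of_nat (S NN) - 2)%Z by lia.
    replace (- Z.of_nat (S NN) - 1)%Z with (- Z.of_nat NN - 2)%Z by lia. ring. }
assert (L : is_lim_seq (fun NN => (n (- Z.of_nat NN - 2)%Z - n (-1)%Z) + n (-1)%Z) (S2 + n (-1)%Z)).
{ apply is_lim_seq_plus'. 2: apply is_lim_seq_const.
  apply (is_lim_seq_ext (sum_n (fun p => E (- Z.of_nat p - 1)%Z))).
  { intro; apply Sm. }
  exact HS2. }
apply (proj2 (is_lim_seq_incr_n _ 2 _)).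
rewrite Rplus_comm.
revert L. apply is_lim_seq_ext. intro p.
replace (- Z.of_nat (p + 2))%Z with (- Z.of_nat p - 2)%Z by lia. ring.
Qed.
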